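(* Let $G_1$ and $G_2$ be $\hbar$-perfect graphs, and let $G$ be the graph obtained from the disjoint union of $G_1$ and $G_2$ by adding all edges between a vertex of $G_1$ and a vertex of $G_2$ (the join). Then $G$ is $\hbar$-perfect.
   Context: A realization of a graph $G$ on $\{1,\dots,n\}$ is a tuple $(S_1,\dots,S_n)$ of Pauli strings (tensor products of matrices from $\{I,X,Y,Z\}$) of common length with $S_i,S_j$ anticommuting iff $i\sim j$ and commuting otherwise; every graph has one. For $w\in\mathbb{R}^n_{\ge0}$, $\beta(G,w)=\sup_\rho\sum_iw_i\operatorname{tr}(\rho S_i)^2$ over density matrices $\rho$ (independent of the realization), and $\alpha(G,w)=\max\{\sum_{i\in I}w_i: I\text{ independent set of }G\}$. $G$ is $\hbar$-perfect if $\beta(G,w)=\alpha(G,w)$ for all $w\in\mathbb{R}^n_{\ge0}$. *)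

(* Defs.v *)
From HB Require Import structures.
From mathcomp Require Import all_boot all_order all_algebra.
From mathcomp Require Import classical_sets reals.
From mathcomp Require Import complex mxtens.
Set Implicit Arguments. Unset Strict Implicit. Unset Printing Implicit Defensive.
Import Order.TTheory GRing.Theory Num.Theory.
Local Open Scope ring_scope.

Definition simple_graph (n : nat) (e : rel 'I_n) : Prop :=
  (forall i j, e i j = e j i) /\ (forall i, ~~ e i i).

Definition graph_join (n1 n2 : nat) (e1 : rel 'I_n1) (e2 : rel 'I_n2)
  : rel 'I_(n1 + n2) :=
  fun i j =>
    match split i, split j with
    | inl a, inl b => e1 a b
    | inr a, inr b => e2 a b
    | _, _ => true
    end.

Definition independent (n : nat) (e : rel 'I_n) (I : {set 'I_n}) : bool :=
  [forall i in I, forall j in I, ~~ e i j].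

Definition alpha (R : realType) (n : nat) (e : rel 'I_n) (w : 'I_n -> R) : R :=
  \big[Num.max/0]_(I : {set 'I_n} | independent e I) \sum_(i in I) w i.

Inductive pauli := PI | PX | PY | PZ.

Section Pauli.
Variable R : rcfType.
Local Notation C := R[i].

Definition pauli_mx (p : pauli) : 'M[C]_2 :=
  match p with
  | PI => \matrix_(a < 2, b < 2) (if a == b then 1 else 0)
  | PX => \matrix_(a < 2, b < 2) (if a == b then 0 else 1)
  | PY => \matrix_(a < 2, b < 2)
            (if a == b then 0 else if (a == 0 :> nat) then - 'i else 'i)
  | PZ => \matrix_(a < 2, b < 2)
            (if a == b then (if (a == 0 :> nat) then 1 else -1) else 0)
  end%C.

Fixpoint pauli_string_mx (s : seq pauli) : 'M[C]_(2 ^ size s) :=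
  match s return 'M[C]_(2 ^ size s) with
  | [::] => 1%:M
  | p :: s' => castmx (esym (expnS 2 (size s')), esym (expnS 2 (size s')))
                      (pauli_mx p *t pauli_string_mx s')
  end.

Definition pstr (m : nat) (t : m.-tuple pauli) : 'M[C]_(2 ^ m) :=
  castmx (congr1 (expn 2) (size_tuple t), congr1 (expn 2) (size_tuple t))
    (pauli_string_mx t).

Definition adjmx (N : nat) (A : 'M[C]_N) : 'M[C]_N := (map_mx Num.conj A)^T.

Definition density (N : nat) (rho : 'M[C]_N) : Prop :=
  [/\ adjmx rho = rho,
      (forall v : 'cV[C]_N, 0 <= ((map_mx Num.conj v)^T *m rho *m v) 0 0)
    & \tr rho = 1].

Definition realization (n m : nat) (e : rel 'I_n) (S : 'I_n -> m.-tuple pauli)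
  : Prop :=
  forall i j, if e i j then pstr (S i) *m pstr (S j) = - (pstr (S j) *m pstr (S i))
              else pstr (S i) *m pstr (S j) = pstr (S j) *m pstr (S i).
End Pauli.

(* beta(G, w) computed with the realization S:
   sup over density matrices rho of sum_i w_i tr(rho S_i)^2
   (tr(rho S_i) is real as rho, S_i are Hermitian; we take its real part). *)
Definition beta (R : realType) (n m : nat) (S : 'I_n -> m.-tuple pauli)
  (w : 'I_n -> R) : R :=
  sup [set x : R | exists rho : 'M[R[i]]_(2 ^ m), density rho /\
        x = \sum_i w i * (complex.Re (\tr (rho *m pstr R (S i)))) ^+ 2].

(* hbar-perfect: beta(G,w) = alpha(G,w) for all nonnegative weights.
   Since beta does not depend on the realization, we require it for every
   realization. *)
Definition hbar_perfect (R : realType) (n : nat) (e : rel 'I_n) : Prop :=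
  forall (m : nat) (S : 'I_n -> m.-tuple pauli), realization R e S ->
  forall w : 'I_n -> R, (forall i, 0 <= w i) -> beta S w = alpha e w.

(* Main.v *)
From HB Require Import structures.
From mathcomp Require Import all_boot all_order all_algebra.
From mathcomp Require Import classical_sets reals.
From mathcomp Require Import complex mxtens sesquilinear spectral.
From mathcomp Require Import ring lra.
Require Import Defs.
Set Implicit Arguments. Unset Strict Implicit. Unset Printing Implicit Defensive.
Import Order.TTheory GRing.Theory Num.Theory.
Local Open Scope ring_scope.
Local Open Scope sesquilinear_scope.

Section Core.
Variable R : realType.
Local Notation C := R[i].

Lemma Re_rc (x : R) : complex.Re (x%:C)%C = x. Proof. by []. Qed.

Lemma real_rc (z : C) : z \is Num.real -> z = ((complex.Re z)%:C)%C.
Proof.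
case: z => a b; rewrite realE !lecE /= => /orP[] /andP[/eqP hb _];
  first [by rewrite hb | by rewrite -hb | (rewrite /= in hb; by rewrite hb)].
Qed.

Lemma ge0_rc (z : C) : 0 <= z -> z = ((complex.Re z)%:C)%C /\ 0 <= complex.Re z.
Proof.
move=> z0; split; first by apply: real_rc; rewrite realE z0.
by move: z0; rewrite lecE => /andP[].
Qed.

Lemma adj_tstar N (A : 'M[C]_N) : adjmx A = A ^t*.
Proof. by rewrite /adjmx map_trmx. Qed.

Lemma herm_of N (H : 'M[C]_N) : adjmx H = H -> H \is hermsymmx.
Proof.
move=> hH; apply/is_hermitianmxP; rewrite expr0 scale1r.
by rewrite -adj_tstar hH.
Qed.

Definition ev N (rho H : 'M[C]_N) : R := complex.Re (\tr (rho *m H)).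

End Core.

Section Spec.
Variable R : realType.
Local Notation C := R[i].

Lemma mul_col_entry m n p (A : 'M[C]_(m, n)) (B : 'M[C]_(n, p)) i k :
  (A *m col k B) i 0 = (A *m B) i k.
Proof. by rewrite !mxE; apply: eq_bigr => j _; rewrite !mxE. Qed.

Lemma row_entry m n (A : 'M[C]_(m, n)) i j : (row i A) 0 j = A i j.
Proof. by rewrite mxE. Qed.

Lemma tr_diagr n (A : 'M[C]_n) (d : 'rV[C]_n) :
  \tr (A *m diag_mx d) = \sum_k A k k * d 0 k.
Proof. by rewrite mul_mx_diag /mxtrace; apply: eq_bigr => k _; rewrite mxE. Qed.

Lemma tr_diagr2 n (A : 'M[C]_n) (d : 'rV[C]_n) :
  \tr (A *m diag_mx d *m diag_mx d) = \sum_k A k k * (d 0 k * d 0 k).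
Proof.
by rewrite !mul_mx_diag /mxtrace; apply: eq_bigr => k _; rewrite !mxE mulrA.
Qed.

Lemma row_tstar n (P : 'M[C]_n) k : (row k P)^t* = col k (P^t*).
Proof. by rewrite -map_trmx map_row tr_row map_trmx. Qed.

Lemma tstarM m n p (A : 'M[C]_(m, n)) (B : 'M[C]_(n, p)) :
  (A *m B)^t* = B^t* *m A^t*.
Proof. by rewrite -!map_trmx map_mxM trmx_mul. Qed.

Lemma adj_tstar_col N (v : 'cV[C]_N) : (map_mx Num.conj v)^T = v^t*.
Proof. by rewrite map_trmx. Qed.

Lemma spec_rep N (H rho : 'M[C]_N) : adjmx H = H -> density rho ->
  exists (d q : 'I_N -> R), [/\ (forall k, 0 <= q k), \sum_k q k = 1,
   ev rho H = \sum_k q k * d k, ev rho (H *m H) = \sum_k q k * d k ^+ 2 &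
   forall k, exists sig : 'M[C]_N, density sig /\ d k = ev sig H].
Proof.
move=> hH [rhoH rhoP rhoT].
have Hn : H \is normalmx := hermitian_normalmx (herm_of hH).
set P := spectralmx H; set dd := spectral_diag H.
have Pu : P \is unitarymx := spectral_unitarymx H.
have HE : H = P^t* *m diag_mx dd *m P.
  by rewrite {1}(orthomx_spectralP Hn) invmx_unitary.
have PPt : P *m P^t* = 1%:M by apply/unitarymxP.
have PtP : P^t* *m P = 1%:M.
  by rewrite -invmx_unitary // mulVmx ?spectral_unit.
have ddr : forall k, dd 0 k = ((complex.Re (dd 0 k))%:C)%C.
  move=> k; apply: real_rc; have := hermitian_spectral_diag_real (herm_of hH).
  by move/mxOverP => /(_ 0 k).
set Q := P *m rho *m P^t*.
have Qk : forall k, Q k k = ((row k P *m rho *m (row k P)^t*) 0 0).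
  by move=> k; rewrite row_tstar mul_col_entry -!row_mul -/Q row_entry.
have Q0 : forall k, 0 <= Q k k.
  move=> k; rewrite Qk; have := rhoP ((row k P)^t*).
  by rewrite adj_tstar_col trmxCK.
pose q k := complex.Re (Q k k); pose d k := complex.Re (dd 0 k).
have Qr : forall k, Q k k = ((q k)%:C)%C by move=> k; have [] := ge0_rc (Q0 k).
have HH : H *m H = P^t* *m diag_mx dd *m diag_mx dd *m P.
  by rewrite HE -!mulmxA (mulmxA P (P^t*)) PPt mul1mx.
exists d, q; split.
- by move=> k; have [] := ge0_rc (Q0 k).
- have : \tr Q = 1.
    by rewrite /Q mxtrace_mulC mulmxA PtP mul1mx.
  by move=> /(congr1 (@complex.Re R)); rewrite /mxtrace raddf_sum.
- rewrite /ev HE !mulmxA mxtrace_mulC !mulmxA -/Q tr_diagr raddf_sum.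
  by apply: eq_bigr => k _; rewrite Qr ddr -rmorphM.
- rewrite /ev HH !mulmxA mxtrace_mulC !mulmxA -/Q tr_diagr2 raddf_sum.
  by apply: eq_bigr => k _; rewrite Qr ddr -!rmorphM expr2.
move=> k; set u := row k P.
have uPt : u *m P^t* = row k 1%:M by rewrite /u -row_mul PPt.
have uu : (u *m u^t*) 0 0 = 1.
  by rewrite /u row_tstar mul_col_entry -row_mul PPt row_entry mxE eqxx.
exists (u^t* *m u); split; first split.
- by rewrite adj_tstar tstarM trmxCK.
- move=> v; set y := u *m v.
  have -> : (map_mx Num.conj v)^T *m (u^t* *m u) *m v = y^t* *m y.
    by rewrite adj_tstar_col /y tstarM !mulmxA.
  rewrite !mxE big_ord1 !mxE mulrC; exact: mul_conjC_ge0.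
- by rewrite mxtrace_mulC /mxtrace big_ord1 uu.
have Put : P *m u^t* = (row k 1%:M)^t* by rewrite -uPt tstarM trmxCK.
rewrite /ev HE -!mulmxA mxtrace_mulC !mulmxA uPt -(mulmxA _ P) Put.
rewrite /mxtrace big_ord1 row_tstar mul_col_entry -!row_mul row_entry.
by rewrite -map_trmx map_mx1 trmx1 mul1mx mulmx1 mxE eqxx mulr1n.
Qed.
End Spec.

Section Ineq.
Variable R : realType.
Local Notation C := R[i].

Lemma sum_prod (I J : finType) (F : I -> R) (G : J -> R) :
  (\sum_i F i) * (\sum_j G j) = \sum_i \sum_j F i * G j.
Proof. by rewrite mulr_suml; apply: eq_bigr => i _; rewrite mulr_sumr. Qed.

Lemma jensen (I : finType) (q d : I -> R) :
  (forall k, 0 <= q k) -> \sum_k q k = 1 ->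
  (\sum_k q k * d k) ^+ 2 <= \sum_k q k * d k ^+ 2.
Proof.
move=> q0 q1; set m := \sum_k q k * d k.
have : 0 <= \sum_k q k * (d k - m) ^+ 2.
  by apply: sumr_ge0 => k _; apply: mulr_ge0 => //; apply: sqr_ge0.
rewrite (eq_bigr (fun k => (q k * d k ^+ 2 - (2 * m) * (q k * d k)) + m ^+ 2 * q k));
  last by move=> k _; ring.
rewrite big_split /= sumrB -!mulr_sumr q1 -/m.
set A := \sum_k _; move=> h; nra.
Qed.

Lemma CS2 (I : finType) (w a b : I -> R) : (forall k, 0 <= w k) ->
  (\sum_k w k * a k * b k) ^+ 2 <= (\sum_k w k * a k ^+ 2) * (\sum_k w k * b k ^+ 2).
Proof.
move=> w0.
have : 0 <= \sum_i \sum_j w i * w j * (a i * b j - a j * b i) ^+ 2.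
  apply: sumr_ge0 => i _; apply: sumr_ge0 => j _.
  by apply: mulr_ge0; [apply: mulr_ge0|apply: sqr_ge0].
rewrite (eq_bigr (fun i => \sum_j ((w i * a i ^+ 2) * (w j * b j ^+ 2)
   + (w i * b i ^+ 2) * (w j * a j ^+ 2) - 2 * ((w i * a i * b i) * (w j * a j * b j))))); last first.
  by move=> i _; apply: eq_bigr => j _; ring.
rewrite (eq_bigr (fun i => \sum_j ((w i * a i ^+ 2) * (w j * b j ^+ 2))
   + \sum_j ((w i * b i ^+ 2) * (w j * a j ^+ 2)) - 2 * \sum_j ((w i * a i * b i) * (w j * a j * b j)))); last first.
  by move=> i _; rewrite sumrB big_split /= mulr_sumr.
rewrite sumrB big_split /= -mulr_sumr -!sum_prod.
set A := \sum_k _; set B := \sum_k _; set D := \sum_k _.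
move=> h; rewrite expr2; nra.
Qed.

Lemma ev_sq N (H rho : 'M[C]_N) : adjmx H = H -> density rho ->
  ev rho H ^+ 2 <= ev rho (H *m H).
Proof.
move=> hH hr; have [d [q [q0 q1 e1 e2 _]]] := spec_rep hH hr.
by rewrite e1 e2; apply: jensen.
Qed.

Lemma ev_bnd N (H rho : 'M[C]_N) (K : R) : adjmx H = H -> density rho ->
  (forall sig : 'M[C]_N, density sig -> ev sig H ^+ 2 <= K) ->
  ev rho (H *m H) <= K.
Proof.
move=> hH hr hK; have [d [q [q0 q1 e1 e2 hs]]] := spec_rep hH hr.
rewrite e2 -[K]mul1r -q1 mulr_suml; apply: ler_sum => k _.
apply: ler_wpM2l => //; have [sig [hsig ->]] := hs k; exact: hK.
Qed.

End Ineq.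

Section P.
Variable R : realType.
Local Notation C := R[i].
Lemma pauli_herm p : adjmx (pauli_mx R p) = pauli_mx R p.
Proof.
case: p; apply/matrixP => a b; rewrite /adjmx !mxE;
case: a => [[|[|a]] ?] //; case: b => [[|[|b]] ?] //=.
all: try by rewrite ?conjC0 ?conjC1.
all: try by rewrite conjCi.
- by rewrite -[RHS]conjCK conjCi.
- by rewrite rmorphN1.
Qed.



Lemma pstring_herm s : adjmx (pauli_string_mx R s) = pauli_string_mx R s.
Proof.
elim: s => [|p s IH] /=; first by rewrite /adjmx map_mx1 trmx1.
rewrite /adjmx map_castmx trmx_cast /= (map_mxT Num.conj) trmx_tens.
by rewrite -!/(adjmx _) IH pauli_herm.
Qed.

Lemma pstr_herm m (t : m.-tuple pauli) : adjmx (pstr R t) = pstr R t.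
Proof.
by rewrite /pstr /adjmx map_castmx trmx_cast /= -/(adjmx _) pstring_herm.
Qed.
End P.

Section Alpha.
Variable R : realType.
Variables (n1 n2 : nat) (e1 : rel 'I_n1) (e2 : rel 'I_n2).

Lemma split_l (a : 'I_n1) : split (lshift n2 a) = inl a.
Proof. exact: (unsplitK (inl a)). Qed.
Lemma split_r (b : 'I_n2) : split (rshift n1 b) = inr b.
Proof. exact: (unsplitK (inr b)). Qed.

Lemma join_ll a b : graph_join e1 e2 (lshift n2 a) (lshift n2 b) = e1 a b.
Proof. by rewrite /graph_join !split_l. Qed.
Lemma join_rr a b : graph_join e1 e2 (rshift n1 a) (rshift n1 b) = e2 a b.
Proof. by rewrite /graph_join !split_r. Qed.
Lemma join_lr a b : graph_join e1 e2 (lshift n2 a) (rshift n1 b) = true.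
Proof. by rewrite /graph_join split_l split_r. Qed.

Lemma alpha_ge0 n (e : rel 'I_n) (w : 'I_n -> R) : 0 <= alpha e w.
Proof. exact: bigmax_ge_id. Qed.

Lemma alpha_ub n (e : rel 'I_n) (w : 'I_n -> R) I :
  independent e I -> \sum_(i in I) w i <= alpha e w.
Proof. by move=> hI; rewrite /alpha; apply: (@le_bigmax_cond _ _ _ 0 I (independent e)). Qed.

Lemma alpha_join (w : 'I_(n1 + n2) -> R) : (forall i, 0 <= w i) ->
  alpha (graph_join e1 e2) w =
  Num.max (alpha e1 (fun a => w (lshift n2 a))) (alpha e2 (fun b => w (rshift n1 b))).
Proof.
move=> w0; apply/eqP; rewrite eq_le; apply/andP; split.
  apply: bigmax_le; first by rewrite le_max alpha_ge0.
  move=> I hI.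
  set I1 := [set a | lshift n2 a \in I]; set I2 := [set b | rshift n1 b \in I].
  have h1 : independent e1 I1.
    apply/forallP => a; apply/implyP; rewrite inE => ha.
    apply/forallP => b; apply/implyP; rewrite inE => hb.
    by rewrite -join_ll; move/forallP: hI => /(_ _) /implyP /(_ ha) /forallP /(_ _) /implyP /(_ hb).
  have h2 : independent e2 I2.
    apply/forallP => a; apply/implyP; rewrite inE => ha.
    apply/forallP => b; apply/implyP; rewrite inE => hb.
    by rewrite -join_rr; move/forallP: hI => /(_ _) /implyP /(_ ha) /forallP /(_ _) /implyP /(_ hb).
  rewrite big_mkcond big_split_ord /= -!big_mkcond /=.
  have -> : \sum_(i < n1 | lshift n2 i \in I) w (lshift n2 i) = \sum_(i in I1) w (lshift n2 i).
    by apply: eq_bigl => a; rewrite inE.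
  have -> : \sum_(i < n2 | rshift n1 i \in I) w (rshift n1 i) = \sum_(i in I2) w (rshift n1 i).
    by apply: eq_bigl => a; rewrite inE.
  have [I1e|[a ha]] := set_0Vmem I1.
    rewrite I1e big_set0 add0r le_max; apply/orP; right; exact: alpha_ub.
  have [I2e|[b hb]] := set_0Vmem I2.
    rewrite I2e big_set0 addr0 le_max; apply/orP; left; exact: alpha_ub.
  exfalso; move: hI; rewrite inE in ha; rewrite inE in hb.
  move/forallP => /(_ _) /implyP /(_ ha) /forallP /(_ _) /implyP /(_ hb).
  by rewrite join_lr.
rewrite ge_max; apply/andP; split; apply: bigmax_le; try exact: alpha_ge0.
  move=> I1 hI1; set I := [set lshift n2 a | a in I1].
  have hI : independent (graph_join e1 e2) I.
    apply/forallP => i; apply/implyP => /imsetP [a ha ->].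
    apply/forallP => j; apply/implyP => /imsetP [b hb ->].
    by rewrite join_ll; move/forallP: hI1 => /(_ _) /implyP /(_ ha) /forallP /(_ _) /implyP /(_ hb).
  have := alpha_ub w hI; rewrite big_imset //; by move=> x y _ _; apply: lshift_inj.
move=> I2 hI2; set I := [set rshift n1 a | a in I2].
have hI : independent (graph_join e1 e2) I.
  apply/forallP => i; apply/implyP => /imsetP [a ha ->].
  apply/forallP => j; apply/implyP => /imsetP [b hb ->].
  by rewrite join_rr; move/forallP: hI2 => /(_ _) /implyP /(_ ha) /forallP /(_ _) /implyP /(_ hb).
have := alpha_ub w hI; rewrite big_imset //; by move=> x y _ _; apply: rshift_inj.
Qed.
End Alpha.

Section Key.
Variable R : realType.
Local Notation C := R[i].

Lemma Re_rcM (r : R) (z : C) : complex.Re ((r%:C)%C * z) = r * complex.Re z.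
Proof. by case: z => a b /=; rewrite mul0r subr0. Qed.

Lemma conj_rc (r : R) : Num.conj ((r%:C)%C : C) = (r%:C)%C.
Proof.
apply/CrealP; rewrite realE ler0c.
have -> : ((r%:C)%C <= 0 :> C) = (r <= 0) by rewrite -(lecR r 0).
exact: le_total.
Qed.

Lemma mxtrace_sum N (I : finType) (M : I -> 'M[C]_N) :
  \tr (\sum_i M i) = \sum_i \tr (M i).
Proof. exact: raddf_sum. Qed.

Lemma Re_sum (I : finType) (F : I -> C) :
  complex.Re (\sum_i F i) = \sum_i complex.Re (F i).
Proof. exact: raddf_sum. Qed.

Lemma conj_sum (I : finType) (F : I -> C) :
  Num.conj (\sum_i F i) = \sum_i Num.conj (F i).
Proof. exact: rmorph_sum. Qed.

Lemma conjM (x y : C) : Num.conj (x * y) = Num.conj x * Num.conj y.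
Proof. exact: rmorphM. Qed.

Lemma ev_add N (rho A B : 'M[C]_N) : ev rho (A + B) = ev rho A + ev rho B.
Proof. by rewrite /ev mulmxDr mxtraceD raddfD. Qed.

Lemma ev_lin N (rho : 'M[C]_N) (I : finType) (r : I -> R) (A : I -> 'M[C]_N) :
  ev rho (\sum_i (r i)%:C%C *: A i) = \sum_i r i * ev rho (A i).
Proof.
rewrite /ev mulmx_sumr mxtrace_sum Re_sum; apply: eq_bigr => i _.
by rewrite -scalemxAr mxtraceZ; exact: Re_rcM.
Qed.

Lemma adj_add N (A B : 'M[C]_N) : adjmx (A + B) = adjmx A + adjmx B.
Proof. by apply/matrixP => i j; rewrite !mxE rmorphD. Qed.

Lemma adj_lin N (I : finType) (r : I -> R) (A : I -> 'M[C]_N) :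
  adjmx (\sum_i (r i)%:C%C *: A i) = \sum_i (r i)%:C%C *: adjmx (A i).
Proof.
apply/matrixP => a b; rewrite /adjmx !mxE !summxE conj_sum.
by apply: eq_bigr => i _; rewrite !mxE conjM conj_rc.
Qed.


Definition Fw N (I : finType) (P : I -> 'M[C]_N) (w : I -> R) (sig : 'M[C]_N) :=
  \sum_i w i * ev sig (P i) ^+ 2.

Lemma Fw_ge0 N (I : finType) (P : I -> 'M[C]_N) (w : I -> R) sig :
  (forall i, 0 <= w i) -> 0 <= Fw P w sig.
Proof.
by move=> w0; apply: sumr_ge0 => i _; apply: mulr_ge0 => //; apply: sqr_ge0.
Qed.

Lemma key N (I1 I2 : finType) (P1 : I1 -> 'M[C]_N) (P2 : I2 -> 'M[C]_N)
  (w1 : I1 -> R) (w2 : I2 -> R) (a1 a2 : R) :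
  (forall i, adjmx (P1 i) = P1 i) -> (forall j, adjmx (P2 j) = P2 j) ->
  (forall i j, P1 i *m P2 j = - (P2 j *m P1 i)) ->
  (forall i, 0 <= w1 i) -> (forall j, 0 <= w2 j) ->
  (forall sig, density sig -> Fw P1 w1 sig <= a1) ->
  (forall sig, density sig -> Fw P2 w2 sig <= a2) ->
  forall rho, density rho -> Fw P1 w1 rho + Fw P2 w2 rho <= Num.max a1 a2.
Proof.
move=> h1 h2 hac w10 w20 b1 b2 rho hr.
set F1 := Fw P1 w1 rho; set F2 := Fw P2 w2 rho.
have F10 : 0 <= F1 by apply: Fw_ge0.
have F20 : 0 <= F2 by apply: Fw_ge0.
pose c1 i := w1 i * ev rho (P1 i); pose c2 j := w2 j * ev rho (P2 j).
pose X := \sum_i (c1 i)%:C%C *: P1 i; pose Y := \sum_j (c2 j)%:C%C *: P2 j.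
have hX : adjmx X = X by rewrite /X adj_lin; apply: eq_bigr => i _; rewrite h1.
have hY : adjmx Y = Y by rewrite /Y adj_lin; apply: eq_bigr => i _; rewrite h2.
have eX : ev rho X = F1.
  by rewrite /X ev_lin /F1 /Fw; apply: eq_bigr => i _; rewrite /c1 expr2 mulrA.
have eY : ev rho Y = F2.
  by rewrite /Y ev_lin /F2 /Fw; apply: eq_bigr => i _; rewrite /c2 expr2 mulrA.
have bX : ev rho (X *m X) <= F1 * a1.
  apply: ev_bnd => // sig hs; rewrite /X ev_lin.
  apply: le_trans (@CS2 R _ w1 (fun i => ev rho (P1 i)) (fun i => ev sig (P1 i)) w10) _.
  apply: ler_wpM2l => //; exact: b1.
have bY : ev rho (Y *m Y) <= F2 * a2.
  apply: ev_bnd => // sig hs; rewrite /Y ev_lin.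
  apply: le_trans (@CS2 R _ w2 (fun i => ev rho (P2 i)) (fun i => ev sig (P2 i)) w20) _.
  apply: ler_wpM2l => //; exact: b2.
have XY : X *m Y = - (Y *m X).
  have E1 : X *m Y = \sum_i \sum_j ((c1 i)%:C%C * (c2 j)%:C%C) *: (P1 i *m P2 j).
    rewrite mulmx_suml; apply: eq_bigr => i _; rewrite mulmx_sumr.
    by apply: eq_bigr => j _; rewrite -scalemxAl -scalemxAr scalerA.
  have E2 : Y *m X = \sum_j \sum_i ((c2 j)%:C%C * (c1 i)%:C%C) *: (P2 j *m P1 i).
    rewrite mulmx_suml; apply: eq_bigr => j _; rewrite mulmx_sumr.
    by apply: eq_bigr => i _; rewrite -scalemxAl -scalemxAr scalerA.
  rewrite E1 E2 (exchange_big _ _ _ _ _ (fun j i => _)) -sumrN; apply: eq_bigr => i _.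
  rewrite -sumrN; apply: eq_bigr => j _.
  by rewrite hac scalerN mulrC.
have ZZ : (X + Y) *m (X + Y) = X *m X + Y *m Y.
  rewrite mulmxDl !mulmxDr XY -!addrA; congr (_ + _).
  by rewrite addrA addNr add0r.
have hZ : adjmx (X + Y) = X + Y by rewrite adj_add hX hY.
have := ev_sq hZ hr; rewrite ZZ !ev_add eX eY => hsq.
have M1 : a1 <= Num.max a1 a2 by rewrite le_max lexx.
have M2 : a2 <= Num.max a1 a2 by rewrite le_max lexx orbT.
have a10 : 0 <= a1 by apply: le_trans F10 (b1 _ hr).
set M := Num.max a1 a2 in M1 M2 *.
have M0 : 0 <= M by apply: le_trans a10 M1.
have : (F1 + F2) ^+ 2 <= M * (F1 + F2).
  apply: le_trans hsq _; apply: le_trans (lerD bX bY) _.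
  rewrite mulrDr; apply: lerD; rewrite [M * _]mulrC; apply: ler_wpM2l => //.
move=> h; nra.
Qed.

End Key.

Section Final.
Variable R : realType.
Local Notation C := R[i].

Lemma pure_density N (u : 'rV[C]_N) : (u *m u^t*) 0 0 = 1 -> density (u^t* *m u).
Proof.
move=> uu; split.
- by rewrite adj_tstar tstarM trmxCK.
- move=> v; set y := u *m v.
  have -> : (map_mx Num.conj v)^T *m (u^t* *m u) *m v = y^t* *m y.
    by rewrite adj_tstar_col /y tstarM !mulmxA.
  rewrite !mxE big_ord1 !mxE mulrC; exact: mul_conjC_ge0.
- by rewrite mxtrace_mulC /mxtrace big_ord1 uu.
Qed.

Lemma exists_density N : (0 < N)%N -> exists rho : 'M[C]_N, density rho.
Proof.
move=> hN; set k : 'I_N := Ordinal hN; exists ((row k 1%:M)^t* *m row k 1%:M).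
apply: pure_density.
rewrite row_tstar mul_col_entry -row_mul row_entry.
by rewrite -map_trmx map_mx1 trmx1 mulmx1 mxE eqxx.
Qed.

Lemma bound_from_beta n (e : rel 'I_n) m (S : 'I_n -> m.-tuple pauli) (w : 'I_n -> R) :
  (forall i, ~~ e i i) -> (forall i, 0 <= w i) -> beta S w = alpha e w ->
  forall sig, density sig -> Fw (fun i => pstr R (S i)) w sig <= alpha e w.
Proof.
move=> irr w0 hb sig hs.
set E := [set x : R | exists rho : 'M[R[i]]_(2 ^ m), density rho /\
        x = \sum_i w i * (complex.Re (\tr (rho *m pstr R (S i)))) ^+ 2]%classic.
case: (boolp.pselect (has_sup E)) => hE.
  by rewrite -hb; apply: (sup_upper_bound hE); exists sig.
have a0 : alpha e w = 0 by rewrite -hb; exact: sup_out.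
have wz : forall i, w i = 0.
  move=> i; apply/eqP; rewrite eq_le w0 andbT -a0.
  have hI : independent e [set i].
    apply/forallP => j; apply/implyP; rewrite inE => /eqP ->.
    apply/forallP => k; apply/implyP; rewrite inE => /eqP ->; exact: irr.
  by have := alpha_ub w hI; rewrite big_set1.
by rewrite a0 /Fw big1 // => i _; rewrite wz mul0r.
Qed.

End Final.

Theorem mainTheorem3 (R : realType) (n1 n2 : nat)
  (e1 : rel 'I_n1) (e2 : rel 'I_n2) :
  simple_graph e1 -> simple_graph e2 ->
  hbar_perfect R e1 -> hbar_perfect R e2 ->
  hbar_perfect R (graph_join e1 e2).
Proof.
move=> [_ irr1] [_ irr2] hp1 hp2 m S hS w w0.
pose S1 a := S (lshift n2 a); pose S2 b := S (rshift n1 b).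
pose w1 a := w (lshift n2 a); pose w2 b := w (rshift n1 b).
have w10 : forall a, 0 <= w1 a by move=> a; apply: w0.
have w20 : forall b, 0 <= w2 b by move=> b; apply: w0.
have r1 : realization R e1 S1.
  by move=> a b; have := hS (lshift n2 a) (lshift n2 b); rewrite join_ll.
have r2 : realization R e2 S2.
  by move=> a b; have := hS (rshift n1 a) (rshift n1 b); rewrite join_rr.
have hb1 := hp1 m S1 r1 w1 w10.
have hb2 := hp2 m S2 r2 w2 w20.
have bd1 := bound_from_beta irr1 w10 hb1.
have bd2 := bound_from_beta irr2 w20 hb2.
set M := Num.max (alpha e1 w1) (alpha e2 w2).
have split_F : forall rho : 'M[R[i]]_(2 ^ m), Fw (fun i => pstr R (S i)) w rho =
   Fw (fun a => pstr R (S1 a)) w1 rho + Fw (fun b => pstr R (S2 b)) w2 rho.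
  by move=> rho; rewrite /Fw big_split_ord.
have ub : forall rho, density rho -> Fw (fun i => pstr R (S i)) w rho <= M.
  move=> rho hr; rewrite split_F.
  apply: (key (P1 := fun a => pstr R (S1 a)) (P2 := fun b => pstr R (S2 b))) => //.
  - by move=> a; apply: pstr_herm.
  - by move=> a; apply: pstr_herm.
  - by move=> a b; have := hS (lshift n2 a) (rshift n1 b); rewrite join_lr.
set E := [set x : R | exists rho : 'M[R[i]]_(2 ^ m), density rho /\
        x = \sum_i w i * (complex.Re (\tr (rho *m pstr R (S i)))) ^+ 2]%classic.
have [rho0 hr0] : exists rho : 'M[R[i]]_(2 ^ m), density rho.
  by apply: exists_density; rewrite expn_gt0.
have En : (E !=set0)%classic.
  by exists (Fw (fun i => pstr R (S i)) w rho0); exists rho0.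
have Eub : ubound E M by move=> x [rho [hr ->]]; exact: ub.
have hE : has_sup E by split; [exact: En | exists M; exact: Eub].
have Esup : forall sig, density sig -> Fw (fun i => pstr R (S i)) w sig <= sup E.
  by move=> sig hs; apply: (sup_upper_bound hE); exists sig.
rewrite alpha_join //.
apply/eqP; rewrite eq_le; apply/andP; split; first exact: ge_sup En Eub.
rewrite ge_max; apply/andP; split.
  rewrite -hb1; apply: ge_sup.
    by exists (Fw (fun a => pstr R (S1 a)) w1 rho0); exists rho0.
  move=> x [sig [hs ->]]; apply: le_trans (Esup sig hs).
  by rewrite split_F lerDl; apply: Fw_ge0.
rewrite -hb2; apply: ge_sup.
  by exists (Fw (fun a => pstr R (S2 a)) w2 rho0); exists rho0.
move=> x [sig [hs ->]]; apply: le_trans (Esup sig hs).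
by rewrite split_F lerDr; apply: Fw_ge0.
Qed.
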